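(* Let $\Sigma$ be a first-order language containing an $m$-ary predicate symbol for some $m\ge 2$, or an $n$-ary function symbol for some $n\ge 1$, and let $\mathcal{T}_\Sigma$ be the family of all complete theories in $\Sigma$. Then ${\rm RS}(\mathcal{T}_\Sigma)=\infty$.
   Context: Theories are complete consistent first-order theories; structures have nonempty universes. If $\Sigma$ is relational, $\mathcal{T}_\Sigma$ is the family of all complete theories of $\Sigma$-structures. If $\Sigma$ contains function symbols (constants being $0$-ary function symbols), each $n$-ary function symbol $f$ is replaced by an $(n+1)$-ary predicate symbol $R_f$ interpreted as the graph $\{(\bar a,b)\mid f(\bar a)=b\}$, and $\mathcal{T}_\Sigma$ is the family of all complete theories of $\Sigma$-structures viewed in this relational language. For a family $\mathcal{T}$ of theories and a sentence $\varphi$ of its language, $\mathcal{T}_\varphi=\{T\in\mathcal{T}\mid\varphi\in T\}$. The rank ${\rm RS}$ of a family is defined as follows: ${\rm RS}(\emptyset)=-1$; ${\rm RS}(\mathcal{T})=0$ for finite nonempty $\mathcal{T}$; ${\rm RS}(\mathcal{T})\ge 1$ for infinite $\mathcal{T}$; for $\alpha=\beta+1$, ${\rm RS}(\mathcal{T})\ge\alpha$ iff there are pairwise inconsistent sentences $\varphi_n$, $n\in\omega$, of the language of $\mathcal{T}$ with ${\rm RS}(\mathcal{T}_{\varphi_n})\ge\beta$ for all $n$; for limit $\alpha$, ${\rm RS}(\mathcal{T})\ge\alpha$ iff ${\rm RS}(\mathcal{T})\ge\beta$ for all $\beta<\alpha$; ${\rm RS}(\mathcal{T})=\alpha$ iff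 ${\rm RS}(\mathcal{T})\ge\alpha$ and not ${\rm RS}(\mathcal{T})\ge\alpha+1$; ${\rm RS}(\mathcal{T})=\infty$ if ${\rm RS}(\mathcal{T})\ge\alpha$ for every ordinal $\alpha$. *)

(* Defs.v *)
From mathcomp Require Import all_boot.
From Stdlib Require Import List.

Set Implicit Arguments.
Unset Strict Implicit.
Unset Printing Implicit Defensive.

Inductive form (S : Type) (ar : S -> nat) : Type :=
  | FEq  : nat -> nat -> form ar
  | FRel : forall s : S, ('I_(ar s) -> nat) -> form ar
  | FNot : form ar -> form ar
  | FAnd : form ar -> form ar -> form ar
  | FEx  : nat -> form ar -> form ar.

Arguments FEq {S ar}.
Arguments FRel {S ar}.
Arguments FNot {S ar}.
Arguments FAnd {S ar}.
Arguments FEx {S ar}.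

Fixpoint free (S : Type) (ar : S -> nat) (x : nat) (phi : form ar) : Prop :=
  match phi with
  | FEq a b => x = a \/ x = b
  | FRel _ v => exists i, v i = x
  | FNot p => free x p
  | FAnd p q => free x p \/ free x q
  | FEx y p => x <> y /\ free x p
  end.

Definition sentence (S : Type) (ar : S -> nat) (phi : form ar) : Prop :=
  forall x, ~ free x phi.

(* structures of a relational language; universes are nonempty *)
Record rstruct (S : Type) (ar : S -> nat) := RStruct {
  rcar :> Type;
  rpt : rcar;
  rrel : forall s : S, ('I_(ar s) -> rcar) -> Prop
}.

Definition upd (M : Type) (e : nat -> M) (x : nat) (a : M) : nat -> M :=
  fun z => if z == x then a else e z.

Fixpoint sat (S : Type) (ar : S -> nat) (M : rstruct ar) (e : nat -> M)
    (phi : form ar) : Prop :=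
  match phi with
  | FEq a b => e a = e b
  | FRel s v => @rrel _ _ M s (fun i => e (v i))
  | FNot p => ~ @sat _ _ M e p
  | FAnd p q => @sat _ _ M e p /\ @sat _ _ M e q
  | FEx x p => exists a : M, @sat _ _ M (upd e x a) p
  end.

Definition theory (S : Type) (ar : S -> nat) := form ar -> Prop.
Definition family (S : Type) (ar : S -> nat) := theory ar -> Prop.

Definition Th (S : Type) (ar : S -> nat) (M : rstruct ar) : theory ar :=
  fun phi => sentence phi /\ @sat _ _ M (fun _ => @rpt _ _ M) phi.

Definition theq (S : Type) (ar : S -> nat) (T1 T2 : theory ar) : Prop :=
  forall phi, T1 phi <-> T2 phi.

Definition fam_restr (S : Type) (ar : S -> nat) (F : family ar) (phi : form ar)
  : family ar := fun T => F T /\ T phi.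

Definition fam_nonempty (S : Type) (ar : S -> nat) (F : family ar) : Prop :=
  exists T, F T.

(* finiteness of a family (theories identified extensionally) *)
Definition fam_finite (S : Type) (ar : S -> nat) (F : family ar) : Prop :=
  exists l : list (theory ar), forall T, F T -> exists T', In T' l /\ theq T T'.

Definition fam_infinite (S : Type) (ar : S -> nat) (F : family ar) : Prop :=
  ~ fam_finite F.

Definition inconsistent (S : Type) (ar : S -> nat) (phi psi : form ar) : Prop :=
  forall (M : rstruct ar) (e : nat -> M), ~ (@sat _ _ M e phi /\ @sat _ _ M e psi).

(* Sigma: predicate symbols P with arities arP, function symbols F with
   arities arF (constants = 0-ary function symbols). *)
Record sstruct (P F : Type) (arP : P -> nat) (arF : F -> nat) := SStruct {
  scar :> Type;
  spt : scar;
  srel : forall p : P, ('I_(arP p) -> scar) -> Prop;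
  sfun : forall f : F, ('I_(arF f) -> scar) -> scar
}.

Definition rel_ar (P F : Type) (arP : P -> nat) (arF : F -> nat) (s : P + F)
  : nat :=
  match s with inl p => arP p | inr f => (arF f).+1 end.

(* R_f is interpreted as the graph {(a, b) | f(a) = b} *)
Definition to_rstruct (P F : Type) (arP : P -> nat) (arF : F -> nat)
    (M : sstruct arP arF) : rstruct (rel_ar arP arF) :=
  @RStruct _ (rel_ar arP arF) (scar M) (spt M)
    (fun s => match s as s0 return ('I_(rel_ar arP arF s0) -> scar M) -> Prop with
      | inl p => fun v => @srel _ _ _ _ M p v
      | inr f => fun v =>
          @sfun _ _ _ _ M f (fun i => v (widen_ord (leqnSn (arF f)) i)) = v ord_max
      end).

Definition T_Sigma (P F : Type) (arP : P -> nat) (arF : F -> nat)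
  : family (rel_ar arP arF) :=
  fun T => exists M : sstruct arP arF, theq T (Th (to_rstruct M)).

(* Ordinals are represented by elements of well-orders: "for every ordinal
   alpha" = for every well-ordered type W and every a : W. *)
Definition well_order (W : Type) (lt : W -> W -> Prop) : Prop :=
  well_founded lt /\
  (forall x, ~ lt x x) /\
  (forall x y z, lt x y -> lt y z -> lt x z) /\
  (forall x y, lt x y \/ x = y \/ lt y x).

Definition is_succ (W : Type) (lt : W -> W -> Prop) (b a : W) : Prop :=
  lt b a /\ forall c, lt b c -> ~ lt c a.

(* G a F  represents  "RS(F) >= a"; RS_spec says G satisfies the defining
   recursion of RS (which determines G uniquely by well-founded induction). *)
Definition RS_spec (S : Type) (ar : S -> nat) (W : Type) (lt : W -> W -> Prop)
    (G : W -> family ar -> Prop) : Prop :=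
  (* alpha = 0 : RS(F) >= 0 iff F nonempty (RS(empty) = -1) *)
  (forall a F, (forall b, ~ lt b a) -> (G a F <-> fam_nonempty F)) /\
  (* alpha = 1 : RS(F) >= 1 iff F infinite *)
  (forall a b F, is_succ lt b a -> (forall c, ~ lt c b) ->
     (G a F <-> fam_infinite F)) /\
  (* alpha = beta + 1, beta >= 1 *)
  (forall a b F, is_succ lt b a -> (exists c, lt c b) ->
     (G a F <->
      exists phis : nat -> form ar,
        (forall n, sentence (phis n)) /\
        (forall n m, n <> m -> inconsistent (phis n) (phis m)) /\
        (forall n, G b (fam_restr F (phis n))))) /\
  (* alpha limit *)
  (forall a F, (exists b, lt b a) -> (forall b, ~ is_succ lt b a) ->
     (G a F <-> forall b, lt b a -> G b F)).

Definition RS_infty (S : Type) (ar : S -> nat) (F : family ar) : Prop :=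
  forall (W : Type) (lt : W -> W -> Prop) (G : W -> family ar -> Prop),
    well_order lt -> @RS_spec S ar W lt G -> forall a : W, G a F.

(* Main.v *)
Require Import Defs.
From mathcomp Require Import all_boot.
From Stdlib Require Import List Classical.

Set Implicit Arguments.
Unset Strict Implicit.
Unset Printing Implicit Defensive.

Definition getv (X : Type) n (v : 'I_n -> X) (k : nat) (d : X) : X :=
  oapp v d (insub k : option 'I_n).

Lemma getvE X n (v : 'I_n -> X) k d (H : k < n) : getv v k d = v (Ordinal H).
Proof. by rewrite /getv (insubT (fun k => k < n) H). Qed.

Definition gq (q : nat -> bool) (z : nat * nat) : nat * nat :=
  if q z.1 && (0 < z.2) && (z.2 <= z.1) then (z.1, z.2.-1) else z.

Definition SS P F (arP : P -> nat) (arF : F -> nat) (q : nat -> bool) : sstruct arP arF :=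
  @SStruct P F arP arF (nat * nat)%type (0,0)
    (fun p v => gq q (getv v 0 (0,0)) = getv v 1 (0,0))
    (fun f v => gq q (getv v 0 (0,0))).

Definition Str P F (arP : P -> nat) (arF : F -> nat) q := to_rstruct (@SS P F arP arF q).

Definition Ef S (ar : S -> nat) (s : S) (x y : nat) : form ar :=
  FRel s (fun i => if nat_of_ord i == 0 then x else y).
Arguments Ef {S ar} s x y.

Fixpoint Bg S (ar : S -> nat) (s : S) (k n : nat) : form ar :=
  match n with
  | 0 => FEq k k
  | n'.+1 => FEx k.+1 (FAnd (Ef s k.+1 k) (FAnd (FNot (Ef s k.+1 k.+1)) (@Bg S ar s k.+1 n')))
  end.
Arguments Bg {S ar} s k n.

Definition sig S (ar : S -> nat) (s : S) (j : nat) : form ar :=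
  FEx 0 (FAnd (Ef s 0 0) (FAnd (Bg s 0 j) (FNot (Bg s 0 j.+1)))).
Arguments sig {S ar} s j.

Definition bit S (ar : S -> nat) (s : S) (j : nat) : form ar := sig s j.+1.
Arguments bit {S ar} s j.

Fixpoint child S (ar : S -> nat) (s : S) (M n : nat) : form ar :=
  match n with
  | 0 => bit s M
  | n'.+1 => FAnd (FNot (bit s M)) (@child S ar s M.+1 n')
  end.
Arguments child {S ar} s M n.

Lemma Ef_free S (ar : S -> nat) (s : S) x a b : free x (@Ef S ar s a b) -> x = a \/ x = b.
Proof. move=> /= [i]; case: (nat_of_ord i == 0) => <-; auto. Qed.

Lemma Bg_free S (ar : S -> nat) (s : S) n k x : free x (@Bg S ar s k n) -> x = k.
Proof.
elim: n k => [|n IH] k /=; first by case.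
move=> [hx [h|[h|h]]].
- by case: (Ef_free h).
- by case: (Ef_free h).
- by case: hx; exact: IH h.
Qed.

Lemma sig_sentence S (ar : S -> nat) (s : S) j : sentence (@sig S ar s j).
Proof.
move=> x [hx [h|[h|h]]].
- by case: (Ef_free h).
- exact: hx (Bg_free h).
- exact: hx (@Bg_free S ar s j.+1 0 x h).
Qed.

Lemma child_sentence S (ar : S -> nat) (s : S) M n : sentence (@child S ar s M n).
Proof.
elim: n M => [|n IH] M x; first exact: (@sig_sentence S ar s M.+1 x).
move=> [h|h]; [exact: (@sig_sentence S ar s M.+1 x h) | exact: IH h].
Qed.

Lemma child_incons S (ar : S -> nat) (s : S) n m M :
  n <> m -> inconsistent (@child S ar s M n) (@child S ar s M m).
Proof.
elim: n m M => [|n IH] [|m] M hnm Mo e //=.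
- by move=> [h1 [h2 _]].
- by move=> [[h1 _] h2].
- move=> [[_ h1] [_ h2]]. apply: (IH m M.+1 _ Mo e); last by split.
  by move=> E; apply: hnm; rewrite E.
Qed.

Fixpoint Hs (X : Type) (g : X -> X) (z : X) (n : nat) : Prop :=
  match n with
  | 0 => True
  | n'.+1 => exists y, g y = z /\ g y <> y /\ Hs g y n'
  end.

Lemma Bg_sem S (ar : S -> nat) (s : S) (Mo : rstruct ar) (g : Mo -> Mo)
  (hE : forall e x y, sat e (Ef s x y) <-> g (e x) = e y) :
  forall n k e, sat e (Bg s k n) <-> Hs g (e k) n.
Proof.
elim=> [|n IH] k e; first by [].
have hk : (k == k.+1) = false by rewrite (ltn_eqF (ltnSn k)).
change (sat e (Bg s k n.+1)) with (exists a, sat (upd e k.+1 a) (Ef s k.+1 k) /\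
  ~ sat (upd e k.+1 a) (Ef s k.+1 k.+1) /\ sat (upd e k.+1 a) (Bg s k.+1 n)).
have U1 a : upd e k.+1 a k.+1 = a by rewrite /upd eqxx.
have U2 a : upd e k.+1 a k = e k by rewrite /upd hk.
split.
- move=> [a [h1 [h2 h3]]]; exists a.
  move/hE: h1; rewrite U1 U2 => h1.
  move/IH: h3; rewrite U1 => h3.
  split => //; split => // h; apply: h2; apply/hE; rewrite U1; exact: h.
- move=> [a [h1 [h2 h3]]]; exists a.
  split; first by apply/hE; rewrite U1 U2.
  split; first by move/hE; rewrite U1.
  by apply/IH; rewrite U1.
Qed.

Lemma sig_sem S (ar : S -> nat) (s : S) (Mo : rstruct ar) (g : Mo -> Mo)
  (hE : forall e x y, sat e (Ef s x y) <-> g (e x) = e y) (e : nat -> Mo) j :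
  sat e (sig s j) <-> exists z, g z = z /\ Hs g z j /\ ~ Hs g z j.+1.
Proof.
change (sat e (sig s j)) with (exists z, sat (upd e 0 z) (Ef s 0 0) /\
  sat (upd e 0 z) (Bg s 0 j) /\ ~ sat (upd e 0 z) (Bg s 0 j.+1)).
have U a : upd e 0 a 0 = a by rewrite /upd eqxx.
split.
- move=> [z [h1 [h2 h3]]]; exists z.
  move/hE: h1; rewrite U => h1.
  move/(Bg_sem hE): h2; rewrite U => h2.
  split => //; split => // h; apply: h3; apply/(Bg_sem hE); rewrite U; exact: h.
- move=> [z [h1 [h2 h3]]]; exists z; split; first by apply/hE; rewrite U.
  split; first by apply/(Bg_sem hE); rewrite U.
  by move/(Bg_sem hE); rewrite U.
Qed.

Lemma Hs_gq (q : nat -> bool) n : forall a i,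
  Hs (gq q) (a, i) n <-> n = 0 \/ (q a /\ i + n <= a).
Proof.
elim: n => [|n IH] a i; first by split => // _; left.
split.
- move=> [[b i'] [h1 [h2 h3]]]. right.
  move: h1 h2; rewrite /gq /=.
  case: (boolP (q b && (0 < i') && (i' <= b))) => // /andP [/andP [qb ip] ib] [<- <-] _.
  move/IH: h3 => [->|[_ h]]; split => //.
    by case: i' ip ib => // i' _ ib /=; rewrite addn1.
  by move: h; case: i' ip ib => // i' _ ib /=; rewrite addSn addnS.
- move=> [//|[qa h]]. exists (a, i.+1).
  have hc : q a && (0 < i.+1) && (i.+1 <= a) by rewrite qa /=; apply: leq_trans h; rewrite addnS ltnS leq_addr.
  rewrite /gq /= hc /=; split => //; split; first by case=> /eqP; rewrite (ltn_eqF (ltnSn i)).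
  apply/IH; right; split => //; by rewrite addSn -addnS.
Qed.

Lemma bit_sem P F (arP : P -> nat) (arF : F -> nat) (s : P + F) (q : nat -> bool)
  (hE : forall (e : nat -> nat * nat) x y,
     @sat _ _ (Str arP arF q) e (Ef s x y) <-> gq q (e x) = e y)
  (e : nat -> nat * nat) j :
  @sat _ _ (Str arP arF q) e (bit s j) <-> q j.+1.
Proof.
rewrite /bit; rewrite (@sig_sem _ _ s (Str arP arF q) (gq q) hE e j.+1).
split.
- move=> [[a i] [hf [/Hs_gq [//|[qa h1]] h2]]].
  have i0 : i = 0.
    move: hf; rewrite /gq /= qa /=; move: h2; case: i h1 => // i h1 _.
    by rewrite (_ : i.+1 <= a) //=; [case=> /eqP; rewrite (ltn_eqF (ltnSn i)) | apply: leq_trans h1; rewrite addSn ltnS leq_addr].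
  subst i.
  have ha : a = j.+1.
    apply/eqP; rewrite eqn_leq; rewrite add0n in h1; rewrite h1 andbT.
    rewrite leqNgt; apply/negP => ha; apply: h2; apply/Hs_gq; right; split => //.
  by rewrite -ha.
- move=> qj; exists (j.+1, 0); split; first by rewrite /gq /= andbF.
  split; first by apply/Hs_gq; right; rewrite add0n.
  move/Hs_gq => [//|[_]]; by rewrite add0n ltnn.
Qed.

Lemma hEP P F (arP : P -> nat) (arF : F -> nat) (p0 : P) (h : 1 < arP p0) q
  (e : nat -> nat * nat) x y :
  @sat _ _ (Str arP arF q) e (Ef (inl p0) x y) <-> gq q (e x) = e y.
Proof.
have h0 : 0 < arP p0 by apply: ltn_trans h.
rewrite /= (getvE _ _ h0) (getvE _ _ h) /=. by [].
Qed.

Lemma hEF P F (arP : P -> nat) (arF : F -> nat) (f0 : F) (h : 0 < arF f0) q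
  (e : nat -> nat * nat) x y :
  @sat _ _ (Str arP arF q) e (Ef (inr f0) x y) <-> gq q (e x) = e y.
Proof.
rewrite /= (getvE _ _ h) /=.
have -> : (arF f0 == 0) = false by rewrite eqn0Ngt h.
by [].
Qed.

Lemma child_sat P F (arP : P -> nat) (arF : F -> nat) (s : P + F) (q : nat -> bool)
  (hE : forall (e : nat -> nat * nat) x y,
     @sat _ _ (Str arP arF q) e (Ef s x y) <-> gq q (e x) = e y)
  (e : nat -> nat * nat) n : forall M,
  (forall k, k < n -> q (M + k).+1 = false) -> q (M + n).+1 ->
  @sat _ _ (Str arP arF q) e (child s M n).
Proof.
elim: n => [|n IH] M h1 h2.
- by apply/(bit_sem hE); rewrite addn0 in h2.
- split.
  + move/(bit_sem hE); rewrite -(addn0 M) h1 //.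
  + apply: IH; last by rewrite addSn -addnS.
    by move=> k hk; rewrite addSn -addnS h1.
Qed.

Fixpoint restrs S (ar : S -> nat) (Fm : Defs.family ar) (l : list (form ar)) : Defs.family ar :=
  match l with
  | nil => Fm
  | phi :: l' => fam_restr (@restrs S ar Fm l') phi
  end.

Definition Good P F (arP : P -> nat) (arF : F -> nat)
  (l : list (form (rel_ar arP arF))) (M : nat) : Prop :=
  exists p : nat -> bool, forall q : nat -> bool,
    (forall j, j < M -> q j.+1 = p j.+1) ->
    forall phi, In phi l -> sentence phi /\ @sat _ _ (Str arP arF q) (fun _ => (0,0)) phi.

Lemma restrs_mem P F (arP : P -> nat) (arF : F -> nat) (q : nat -> bool) l :
  (forall phi, In phi l -> sentence phi /\ @sat _ _ (Str arP arF q) (fun _ => (0,0)) phi) ->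
  restrs (@T_Sigma P F arP arF) l (Th (Str arP arF q)).
Proof.
elim: l => [|phi l IH] h /=.
- by exists (SS arP arF q).
- split; first by apply: IH => psi hp; apply: h; right.
  by apply: h; left.
Qed.

Definition pext (M n : nat) (p : nat -> bool) : nat -> bool :=
  fun k => if k.-1 < M then p k else (k.-1 == M + n).

Lemma pext_agree M n p (q : nat -> bool) :
  (forall j, j < (M + n).+1 -> q j.+1 = pext M n p j.+1) ->
  (forall j, j < M -> q j.+1 = p j.+1) /\ (forall k, k < n -> q (M + k).+1 = false)
  /\ q (M + n).+1.
Proof.
move=> h; split; last split.
- move=> j hj; rewrite h /pext /= ?hj //; apply: (leq_trans hj); rewrite -addnS leq_addr //.
- move=> k hk; rewrite h /pext /=; last by rewrite ltnS leq_add2l ltnW.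
  rewrite ltnNge leq_addr /= eqn_add2l; apply/negbTE; by rewrite neq_ltn hk.
- rewrite h // /pext /= ltnNge leq_addr /=; exact: eqxx.
Qed.


Lemma Good_child P F (arP : P -> nat) (arF : F -> nat) (s : P + F)
  (hE : forall q (e : nat -> nat * nat) x y,
     @sat _ _ (Str arP arF q) e (Ef s x y) <-> gq q (e x) = e y)
  l M n : Good l M -> @Good P F arP arF (child s M n :: l) (M + n).+1.
Proof.
move=> [p hp]; exists (pext M n p) => q hq.
have [h1 [h2 h3]] := pext_agree hq.
move=> phi [<-|hin]; last exact: hp.
split; first exact: child_sentence.
exact: child_sat.
Qed.

Lemma Good_inf P F (arP : P -> nat) (arF : F -> nat) (s : P + F)
  (hE : forall q (e : nat -> nat * nat) x y,
     @sat _ _ (Str arP arF q) e (Ef s x y) <-> gq q (e x) = e y)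
  l M : Good l M -> fam_infinite (restrs (@T_Sigma P F arP arF) l).
Proof.
move=> [p hp].
pose T n := Th (Str arP arF (pext M n p)).
have hag n : forall j, j < (M + n).+1 -> pext M n p j.+1 = pext M n p j.+1 by [].
have inT n : restrs (@T_Sigma P F arP arF) l (T n).
  apply: restrs_mem; apply: hp; by have [h1 _] := pext_agree (hag n).
have hc n : T n (child s M n).
  have [_ [h2 h3]] := pext_agree (hag n).
  split; first exact: child_sentence.
  exact: child_sat.
have hneq n m : n <> m -> ~ T m (child s M n).
  move=> hnm [_ hs]. apply: (@child_incons _ _ s n m M hnm (Str arP arF (pext M m p)) (fun _ => (0,0))).
  split; first exact: hs. by case: (hc m).
have key : forall L : list (theory (rel_ar arP arF)), exists N, forall n, N <= n ->
    forall T', In T' L -> ~ theq (T n) T'.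
  elim=> [|T' L [N hN]]; first by exists 0.
  case: (classic (exists n, N <= n /\ theq (T n) T')) => [[n0 [hn0 hq0]]|hno].
  - exists n0.+1 => n hn T'' [<-|hin] hq.
    + apply: (hneq n0 n); first by move=> E; rewrite E ltnn in hn.
      apply/hq; apply/hq0; exact: hc.
    + apply: (hN n _ T'' hin hq). apply: leq_trans hn0 _; exact: ltnW.
  - exists N => n hn T'' [<-|hin] hq.
    + apply: hno; by exists n.
    + exact: (hN n hn T'' hin hq).
move=> [L hL].
have [N hN] := key L.
have [T' [hin hq]] := hL _ (inT N).
exact: (hN N (leqnn N) T' hin hq).
Qed.

Lemma mainI P F (arP : P -> nat) (arF : F -> nat) (s : P + F)
  (hE : forall q (e : nat -> nat * nat) x y,
     @sat _ _ (Str arP arF q) e (Ef s x y) <-> gq q (e x) = e y)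
  (W : Type) (lt : W -> W -> Prop) (G : W -> Defs.family (rel_ar arP arF) -> Prop)
  (wo : well_order lt) (sp : RS_spec lt G) :
  forall a l M, @Good P F arP arF l M -> G a (restrs (@T_Sigma P F arP arF) l).
Proof.
have [wf _] := wo.
have [s0 [s1 [s2 s3]]] := sp.
move=> a; elim/(well_founded_ind wf): a => a IH l M hg.
case: (classic (exists b, lt b a)) => [hex|hmin].
- case: (classic (exists b, is_succ lt b a)) => [[b hs]|hns].
  + case: (classic (exists c, lt c b)) => [hc|hbmin].
    * apply/(s2 a b _ hs hc).
      exists (child s M); split; first by move=> n; exact: child_sentence.
      split; first by move=> n m; exact: child_incons.
      move=> n; apply: (IH b (proj1 hs) (child s M n :: l) (M + n).+1).
      exact: Good_child.
    * apply/(s1 a b _ hs); first by move=> c hc; apply: hbmin; exists c.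
      exact: Good_inf hg.
  + apply/(s3 a _ hex); first by move=> b hb; apply: hns; exists b.
    move=> b hb; exact: IH b hb l M hg.
- apply/(s0 a _); first by move=> b hb; apply: hmin; exists b.
  have [p hp] := hg.
  exists (Th (Str arP arF p)); apply: restrs_mem; exact: hp.
Qed.

Theorem proposition2p6 (P F : Type) (arP : P -> nat) (arF : F -> nat) :
  ((exists p : P, 2 <= arP p) \/ (exists f : F, 1 <= arF f)) ->
  @RS_infty (P + F) (@rel_ar P F arP arF) (@T_Sigma P F arP arF).
Proof.
move=> hyp W lt G wo sp a.
have hg : @Good P F arP arF nil 0 by exists (fun _ => true) => q _ phi [].
case: hyp => [[p0 hp0]|[f0 hf0]].
- apply: (@mainI P F arP arF (inl p0) _ W lt G wo sp a nil 0 hg).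
  move=> q e x y; exact: hEP.
- apply: (@mainI P F arP arF (inr f0) _ W lt G wo sp a nil 0 hg).
  move=> q e x y; exact: hEF.
Qed.
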